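(* Let $m\ge1$ and $Q=T_{(2^m)}$. Then $K_Q(2)$ is isomorphic to the dihedral group $D_{2^{m+1}}$ of order $2^{m+1}$.
   Context: Let $\{|0\rangle,|1\rangle\}$ be the computational basis of $\mathbb{C}^2$ and $X$ the Pauli shift $X|q\rangle=|q+1 \bmod 2\rangle$. For $\xi:\mathbb{Z}_2\to U(1)$ let $S_\xi=\mathrm{diag}(\xi(0),\xi(1))$; $T=\{S_\xi:\xi(0)\xi(1)=1\}$ and $T_{(2^m)}=\{S\in T:S^{2^m}=\mathbbm{1}\}$. $K_Q(2)$ is the subgroup of $SU(2)$ generated by all $S_\xi X^b$ with $S_\xi\in Q$, $b\in\mathbb{Z}_2$. $D_{2^{m+1}}$ denotes the dihedral group $\langle r,s\mid r^{2^m}=s^2=1,srs=r^{-1}\rangle$. *)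

(* Defs.v *)
From mathcomp Require Import all_boot all_order all_algebra all_fingroup all_solvable all_field.
Set Implicit Arguments. Unset Strict Implicit. Unset Printing Implicit Defensive.
Import GRing.Theory Num.Theory.
Local Open Scope ring_scope.

(* Pauli shift X|q> = |q+1 mod 2> : entry (i,j) is 1 iff i = j+1 mod 2. *)
Definition Xmat : 'M[algC]_2 :=
  \matrix_(i < 2, j < 2) (if (i : nat) == ((j + 1) %% 2)%N then 1 else 0).

Definition Smat (xi : 'I_2 -> algC) : 'M[algC]_2 := diag_mx (\row_i xi i).

Definition inT (A : 'M[algC]_2) : Prop :=
  exists xi : 'I_2 -> algC,
    (forall q, `|xi q| = 1) /\ xi 0 * xi 1 = 1 /\ A = Smat xi.

Definition T2pow (m : nat) (A : 'M[algC]_2) : Prop :=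
  inT A /\ A ^+ (2 ^ m) = 1.

Inductive gen_by (P : 'M[algC]_2 -> Prop) : 'M[algC]_2 -> Prop :=
  | gen_one : gen_by P 1%:M
  | gen_base A : P A -> gen_by P A
  | gen_mul A B : gen_by P A -> gen_by P B -> gen_by P (A *m B)
  | gen_inv A : gen_by P A -> gen_by P (invmx A).

Definition K_Q (Q : 'M[algC]_2 -> Prop) : 'M[algC]_2 -> Prop :=
  gen_by (fun A => exists S (b : 'I_2), Q S /\ A = S *m (Xmat ^+ b)).

(* Main.v *)
Require Import Defs.
From mathcomp Require Import all_boot all_order all_algebra all_fingroup all_solvable all_field.
From mathcomp Require Import zify ring lra.
Import GRing.Theory Num.Theory.
Local Open Scope ring_scope.

Lemma eq_Smat (xi eta : 'I_2 -> algC) : (forall i, xi i = eta i) -> Smat xi = Smat eta.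
Proof. by move=> h; rewrite /Smat; congr diag_mx; apply/rowP => i; rewrite !mxE h. Qed.

Lemma SmatM (xi eta : 'I_2 -> algC) : Smat xi * Smat eta = Smat (fun i => xi i * eta i).
Proof. by rewrite -mulmxE /Smat mulmx_diag; congr diag_mx; apply/rowP => i; rewrite !mxE. Qed.

Lemma Smat1 : Smat (fun _ => 1) = 1.
Proof. by apply/matrixP => i j; rewrite !mxE. Qed.

Lemma SmatX (xi : 'I_2 -> algC) n : Smat xi ^+ n = Smat (fun i => xi i ^+ n).
Proof.
elim: n => [|n IH]; first by rewrite expr0 -Smat1; apply: eq_Smat => i; rewrite expr0.
by rewrite exprS IH SmatM; apply: eq_Smat => i; rewrite exprS.
Qed.

Lemma XX : Xmat * Xmat = 1.
Proof.
apply/matrixP => i j; rewrite -mulmxE !mxE !big_ord_recl !big_ord0 !mxE.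
by case: i => [[|[|//]] ?]; case: j => [[|[|//]] ?]; rewrite /= ?mul0r ?mul1r ?addr0 ?add0r.
Qed.

Lemma XS (xi : 'I_2 -> algC) : Xmat * Smat xi = Smat (fun i => xi (i + 1)) * Xmat.
Proof.
apply/matrixP => i j; rewrite -!mulmxE !mxE !big_ord_recl !big_ord0 !mxE.
case: i => [[|[|//]] ?]; case: j => [[|[|//]] ?]; rewrite /= ?mul0r ?mul1r ?mulr0 ?mulr1 ?addr0 ?add0r /= //; by congr (_ *+ _); congr xi; apply/val_inj.
Qed.

Lemma SXentry (xi : 'I_2 -> algC) (b : 'I_2) :
  (Smat xi * Xmat ^+ b) 0 0 = (if val b == 0%N then xi 0 else 0) /\
  (Smat xi * Xmat ^+ b) 0 1 = (if val b == 1%N then xi 0 else 0).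
Proof.
case: b => [[|[|//]] ?] /=.
  by rewrite expr0 mulr1 !mxE.
rewrite expr1 -mulmxE !mxE !big_ord_recl !big_ord0 !mxE /=.
by rewrite ?mul0r ?mul1r ?mulr0 ?mulr1 ?addr0 ?add0r.
Qed.

Theorem lemma8 (m : nat) (hm : (1 <= m)%N) :
  exists f : 'D_(2 ^ m.+1) -> 'M[algC]_2,
    injective f /\
    (forall x y : 'D_(2 ^ m.+1), f (x * y)%g = f x *m f y) /\
    (forall A : 'M[algC]_2, K_Q (T2pow m) A <-> exists x, f x = A).
Proof.
have m1 : (1 < m.+1)%N by [].
have [[x y] gen [oy xy]] := generators_2dihedral m1 (isog_refl 'D_((2 ^ m.+1)%N)%G).
have [_ _ _ defG _] := extremal_generators_facts (isT : prime 2) gen.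
case: gen => _ _ ox /setDP[_ notXy].
rewrite /= in ox.
have [k Nk] : exists k, (2 ^ m)%N = k.+2.
  exists (2 ^ m - 2)%N; have : (2 <= 2 ^ m)%N by rewrite -{1}(expn1 2) leq_exp2l.
  lia.
rewrite Nk in ox.
set N := (2 ^ m)%N in Nk *.
have y2 : (y ^+ 2 = 1)%g by move: (expg_order y); rewrite oy.
have yV : (y^-1 = y)%g by rewrite invg_expg oy.
have xV : (x^-1 = x ^+ k.+1)%g by rewrite invg_expg ox.
have yx1 : (y * x = x ^+ k.+1 * y)%g.
  by rewrite -xV -xy conjgE yV -!mulgA -[(y * y)%g]/(y ^+ 2)%g y2 mulg1.
have yx c : (y * x ^+ c = x ^+ (c * k.+1) * y)%g.
  elim: c => [|c IH]; first by rewrite !expg0 mulg1 mul1g.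
  by rewrite expgSr mulgA IH -mulgA yx1 mulgA -expgD mulSn addnC.
have N0 : (0 < k.+2)%N by [].
have [w pw] := C_prim_root_exists N0.
have wN : w ^+ k.+2 = 1 := prim_expr_order pw.
have w0 : w != 0.
  by apply/eqP => w0; move: wN; rewrite w0 expr0n /= => /eqP; rewrite eq_sym oner_eq0.
pose r (i : 'I_2) := if val i == 0%N then w else w ^+ k.+1.
pose R := Smat r.
have RN : R ^+ k.+2 = 1.
  rewrite /R SmatX -Smat1; apply: eq_Smat => i; rewrite /r.
  by case: ifP => _; rewrite ?wN // exprAC wN expr1n.
have X2 : Xmat ^+ 2 = 1 by rewrite expr2 XX.
have XR1 : Xmat * R = R ^+ k.+1 * Xmat.
  rewrite /R XS SmatX; congr (_ * _); apply: eq_Smat => i; rewrite /r.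
  case: i => [[|[|//]] ?] /=; first by [].
  rewrite -exprM; have -> : (k.+1 * k.+1 = k.+2 * k + 1)%N by lia.
  by rewrite exprD exprM wN expr1n mul1r expr1.
have XR c : Xmat * R ^+ c = R ^+ (c * k.+1) * Xmat.
  elim: c => [|c IH]; first by rewrite !expr0 mulr1 mul1r.
  by rewrite exprSr mulrA IH -mulrA XR1 mulrA -exprD mulSn addnC.
have xN : (x ^+ k.+2 = 1)%g by rewrite -ox expg_order.
have eqx a c : (x ^+ a = x ^+ c)%g -> R ^+ a = R ^+ c.
  move/eqP; rewrite eq_expg_mod_order ox => /eqP h.
  by rewrite -(expr_mod a RN) h expr_mod.
have uniqG a c (b d : 'I_2) : (x ^+ a * y ^+ b = x ^+ c * y ^+ d)%g ->
    b = d /\ (x ^+ a = x ^+ c)%g.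
  have yX a' c' : (x ^+ a' = x ^+ c' * y)%g -> False.
    move=> h; apply: (negP notXy).
    have -> : y = ((x ^+ c')^-1 * x ^+ a')%g by rewrite h mulKg.
    by rewrite groupM ?groupV ?mem_cycle.
  case: b => [[|[|//]] hb]; case: d => [[|[|//]] hd] /=; rewrite ?expg0 ?expg1 ?mulg1.
  - by move=> h; split => //; apply: val_inj.
  - by move/yX.
  - by move/esym/yX.
  - by move/mulIg => h; split => //; apply: val_inj.
have uniqM a c (b d : 'I_2) : R ^+ a * Xmat ^+ b = R ^+ c * Xmat ^+ d ->
    b = d /\ w ^+ a = w ^+ c.
  rewrite /R !SmatX => h.
  have [h1 h2] := SXentry (fun i => r i ^+ a) b.
  have [h3 h4] := SXentry (fun i => r i ^+ c) d.
  rewrite h in h1 h2; rewrite h1 in h3; rewrite h2 in h4; rewrite /r /= in h3 h4.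
  have wa0 : forall e, w ^+ e != 0 by move=> e; rewrite expf_neq0.
  clear h h1 h2; case: b h3 h4 => [[|[|//]] hb]; case: d => [[|[|//]] hd] /= h3 h4.
  - by split => //; apply: val_inj.
  - by move: (wa0 a); rewrite h3 eqxx.
  - by move: (wa0 c); rewrite -h3 eqxx.
  - by split => //; apply: val_inj.
have decomp g : exists a (b : 'I_2), g = (x ^+ a * y ^+ b)%g.
  have : g \in (<[x]> * <[y]>)%g by rewrite defG inE.
  case/mulsgP => u v /cycleP[a ->] /cycleP[b ->] ->.
  exists a, (Ordinal (ltn_pmod b (isT : (0 < 2)%N))).
  by rewrite /= expg_mod.
pose f (g : 'D_((2 ^ m.+1)%N)) :=
  if [pick p : 'I_k.+2 * 'I_2 | g == (x ^+ p.1 * y ^+ p.2)%g] is Some p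
  then R ^+ p.1 * Xmat ^+ p.2 else 0.
have fE' a (b : 'I_2) : f (x ^+ a * y ^+ b)%g = R ^+ a * Xmat ^+ b.
  rewrite /f; case: pickP => [p /eqP h | none].
    have [-> hx] := uniqG _ _ _ _ h.
    by rewrite (eqx _ _ hx).
  move: (none (Ordinal (ltn_pmod a N0), b)).
  by rewrite /= expg_mod // eqxx.
have fE a b : f (x ^+ a * y ^+ b)%g = R ^+ a * Xmat ^+ b.
  rewrite -(expg_mod b y2) -(expr_mod b X2).
  exact: (fE' a (Ordinal (ltn_pmod b (isT : (0 < 2)%N)))).
have f1 : f 1%g = 1.
  by move: (fE 0%N 0%N); rewrite !expg0 mulg1 !expr0 mulr1.
have fM g h : f (g * h)%g = f g *m f h.
  have [a [b ->]] := decomp g; have [c [d ->]] := decomp h.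
  rewrite mulmxE !fE.
  case: b => [[|[|//]] hb] /=.
    rewrite expg0 mulg1 mulgA -expgD fE.
    by rewrite expr0 mulr1 mulrA -exprD.
  have -> : (x ^+ a * y ^+ 1 * (x ^+ c * y ^+ d) = x ^+ (a + c * k.+1) * y ^+ d.+1)%g.
    by rewrite expg1 expgD expgS !mulgA -(mulgA _ y) yx !mulgA.
  rewrite fE.
  by rewrite expr1 exprD exprS !mulrA -(mulrA (R ^+ a) Xmat) XR !mulrA.
exists f; split.
  move=> g h; have [a [b ->]] := decomp g; have [c [d ->]] := decomp h.
  rewrite !fE' => /uniqM [<- hw].
  move/eqP: hw; rewrite (eq_prim_root_expr pw) => hac.
  congr (_ * _)%g; apply/eqP; rewrite eq_expg_mod_order ox; exact: hac.
split; first exact: fM.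
have Nk' : (2 ^ m)%N = k.+2 := Nk.
have nw : `|w| = 1.
  by apply/eqP; rewrite -(pexpr_eq1 N0 (normr_ge0 w)) -normrX wN normr1.
move=> A; split.
  move=> HA; elim: HA.
  - by exists 1%g; exact: f1.
  - move=> _ [S [b [[[xi [hxi [hx01 ->]]] hSN] ->]]].
    rewrite Nk' SmatX in hSN.
    have h0 : xi 0 ^+ k.+2 = 1.
      by have := congr1 (fun M : 'M[algC]_2 => M 0 0) hSN; rewrite !mxE /= !mulr1n.
    have [i hi] := prim_rootP pw h0.
    exists (x ^+ i * y ^+ b)%g; rewrite fE mulmxE; congr (_ * _).
    rewrite /R SmatX; apply: eq_Smat => j.
    case: j => [[|[|//]] hj].
      have -> : Ordinal hj = 0 by apply/val_inj.
      by rewrite hi.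
    have -> : Ordinal hj = 1 by apply/val_inj.
    have wi0 : w ^+ i != 0 by rewrite expf_neq0.
    symmetry; apply: (mulfI wi0); rewrite -{1}hi hx01 /r /= -exprMn -exprS.
    by rewrite wN expr1n.
  - by move=> _ _ _ [g <-] _ [h <-]; exists (g * h)%g; rewrite fM.
  - move=> _ _ [g <-]; exists (g^-1)%g.
    have hgi : f g *m f (g^-1)%g = 1%:M by rewrite -fM mulgV f1.
    have [u _] := mulmx1_unit hgi.
    by rewrite -(mulKmx u (f (g^-1)%g)) hgi mulmx1.
case=> g <-; have [a [b ->]] := decomp g; rewrite fE'.
apply: gen_base; exists (R ^+ a), b; split; last by rewrite mulmxE.
split; last by rewrite Nk' exprAC RN expr1n.
exists (fun i => r i ^+ a); split; [|split].
- by move=> q; rewrite normrX /r; case: ifP => _; rewrite ?normrX nw ?expr1n.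
- by rewrite /r /= -exprMn -exprS wN expr1n.
- by rewrite /R SmatX.
Qed.
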